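(* For every $\theta\in[0,\pi)$, the set of minimisers of $\overline Q^{\,\theta}_T$ on $\mathbb{R}^2$ is exactly the segment $[\alpha^T_{\theta,1},\alpha^T_{\theta,2}]\times\{\beta_\theta\}$, where $$\beta_\theta:=\frac{kc_1}{2c}\sin2\theta,\qquad \alpha^T_{\theta,1}:=-\frac{kc_1}{2c}(1+\cos2\theta),\qquad \alpha^T_{\theta,2}:=\frac{kc_1}{2c}(1-\cos2\theta).$$ Moreover $\min_{\mathbb{R}^2}\overline Q^{\,\theta}_T=c_1k^2\big(2-\tfrac{c_1}{c}\big)+\bar e_T$.
   Context: Fix constants $c_1>0$, $c_2>0$, $c:=c_1+c_2$, $k>0$, $\bar e_T\ge0$, $\theta\in[0,\pi)$. Let $a_\theta=\cos2\theta$, $b_\theta=\sin2\theta$ and $\bar A^\theta_T:=k\begin{pmatrix}-a_\theta&b_\theta\\ b_\theta&a_\theta\end{pmatrix}$. For matrices $M\cdot N={\rm tr}(M^{\rm T}N)$, $|M|^2=M\cdot M$. For $M\in\mathbb{R}^{2\times2}_{\rm sym}$, $L^\theta_T(M):=-2c_1M\cdot\bar A^\theta_T+2c_1k^2+\bar e_T$. For $(\alpha,\beta)\in\mathbb{R}^2$, $$\overline Q^{\,\theta}_T(\alpha,\beta):=\min_{\gamma\in\mathbb{R}}\Big\{c|M|^2+2c|\det M|+L^\theta_T(M): M=\begin{pmatrix}\alpha&\beta\\ \beta&\gamma\end{pmatrix}\Big\}.$$ *)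

(* Defs.v *)
From Stdlib Require Import Reals Lra ClassicalEpsilon.
Open Scope R_scope.

Record M2 := mkM2 { m11 : R; m12 : R; m21 : R; m22 : R }.

Definition mdot (M N : M2) : R :=
  m11 M * m11 N + m12 M * m12 N + m21 M * m21 N + m22 M * m22 N.

Definition mnorm2 (M : M2) : R := mdot M M.

Definition mdet (M : M2) : R := m11 M * m22 M - m12 M * m21 M.

Definition Abar (k theta : R) : M2 :=
  mkM2 (k * - cos (2*theta)) (k * sin (2*theta))
       (k * sin (2*theta)) (k * cos (2*theta)).

Definition LT (c1 k ebar theta : R) (M : M2) : R :=
  - 2 * c1 * mdot M (Abar k theta) + 2 * c1 * k ^ 2 + ebar.

Definition symM (alpha beta gamma : R) : M2 := mkM2 alpha beta beta gamma.

Definition Qfun (c1 c2 k ebar theta alpha beta gamma : R) : R :=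
  let M := symM alpha beta gamma in
  (c1 + c2) * mnorm2 M + 2 * (c1 + c2) * Rabs (mdet M) + LT c1 k ebar theta M.

Definition is_min_gamma (c1 c2 k ebar theta alpha beta q : R) : Prop :=
  (exists gamma, Qfun c1 c2 k ebar theta alpha beta gamma = q) /\
  (forall gamma, q <= Qfun c1 c2 k ebar theta alpha beta gamma).

(* \bar Q^theta_T(alpha,beta) := min_gamma Qfun; defined by choice as the
   (unique, if it exists) minimum value. *)
Definition Qbar (c1 c2 k ebar theta alpha beta : R) : R :=
  epsilon (inhabits 0) (is_min_gamma c1 c2 k ebar theta alpha beta).

(* Main.v *)
Require Import Defs.
From Stdlib Require Import Reals Lra Psatz ClassicalEpsilon.
Open Scope R_scope.

Lemma absmin (c B D E : R) : 0 < c -> exists g0, forall g,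
  c*g0^2 + B*g0 + Rabs(D*g0+E) <= c*g^2 + B*g + Rabs(D*g+E).
Proof.
  intro hc.
  set (p1 := -(B+D)/(2*c)). set (p2 := -(B-D)/(2*c)).
  assert (e1 : 2*c*p1 = -(B+D)) by (unfold p1; field; lra).
  assert (e2 : 2*c*p2 = -(B-D)) by (unfold p2; field; lra).
  destruct (Rle_dec 0 (D*p1+E)) as [h1|h1].
  - exists p1. intro g. rewrite (Rabs_right (D*p1+E)) by lra.
    assert (D*g+E <= Rabs(D*g+E)) by apply Rle_abs.
    assert (0 <= c*(g-p1)^2) by (apply Rmult_le_pos; [lra| apply pow2_ge_0]).
    nra.
  - destruct (Rle_dec (D*p2+E) 0) as [h2|h2].
    + exists p2. intro g. rewrite (Rabs_left1 (D*p2+E)) by lra.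
      assert (-(D*g+E) <= Rabs(D*g+E)) by (rewrite <- Rabs_Ropp; apply Rle_abs).
      assert (0 <= c*(g-p2)^2) by (apply Rmult_le_pos; [lra| apply pow2_ge_0]).
      nra.
    + assert (hD : D <> 0) by (intro hD; rewrite hD in h1, h2; lra).
      set (z := -E/D). assert (ez : D*z+E = 0) by (unfold z; field; auto).
      clearbody z. exists z. intro g. rewrite ez, Rabs_R0.
      destruct (Rle_dec 0 (D*g+E)) as [h3|h3].
      * rewrite (Rabs_right (D*g+E)) by lra.
        assert (hp : 0 <= (D*(g-z))*(D*(z-p1))) by (apply Rmult_le_pos; [replace (D*(g-z)) with (D*g+E - (D*z+E)) by ring | replace (D*(z-p1)) with ((D*z+E) - (D*p1+E)) by ring]; lra).
        assert (hq : 0 <= (g-z)*(z-p1)).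
        { assert (0 < D*D) by nra.
          apply (Rmult_le_reg_l (D*D)); [lra|]. nra. }
        assert (0 <= c*((g-z)^2 + 2*((g-z)*(z-p1)))) by
          (apply Rmult_le_pos; [lra| nra]).
        assert (E = -(D*z)) by lra. subst E. nra.
      * rewrite (Rabs_left1 (D*g+E)) by lra.
        assert (hp : 0 <= (D*(z-g))*(D*(p2-z))) by (apply Rmult_le_pos; [replace (D*(z-g)) with ((D*z+E) - (D*g+E)) by ring | replace (D*(p2-z)) with ((D*p2+E) - (D*z+E)) by ring]; lra).
        assert (hq : 0 <= (z-g)*(p2-z)).
        { assert (0 < D*D) by nra.
          apply (Rmult_le_reg_l (D*D)); [lra|]. nra. }
        assert (0 <= c*((g-z)^2 + 2*((z-g)*(p2-z)))) by
          (apply Rmult_le_pos; [lra| nra]).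
        assert (E = -(D*z)) by lra. subst E. nra.
Qed.

Lemma Qfun_eq c1 c2 k e th al be ga :
  Qfun c1 c2 k e th al be ga = (c1+c2)*(al^2+2*be^2+ga^2)
   + 2*(c1+c2)*Rabs(al*ga - be*be)
   - 2*c1*k*(cos(2*th)*(ga-al) + 2*sin(2*th)*be) + 2*c1*k^2 + e.
Proof. unfold Qfun, LT, mnorm2, mdot, mdet, symM, Abar; simpl; ring. Qed.

Theorem lemma3p3 (c1 c2 k ebar theta : R)
  (hc1 : 0 < c1) (hc2 : 0 < c2) (hk : 0 < k) (he : 0 <= ebar)
  (hth0 : 0 <= theta) (hth1 : theta < PI) :
  let c := c1 + c2 in
  let Q := Qbar c1 c2 k ebar theta in
  (* the minimum over gamma exists for every (alpha, beta) *)
  (forall alpha beta, is_min_gamma c1 c2 k ebar theta alpha beta (Q alpha beta)) /\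
  (* the set of minimisers of Q on R^2 is exactly the segment *)
  (forall alpha beta,
     (forall a b, Q alpha beta <= Q a b) <->
     (beta = k * c1 / (2 * c) * sin (2 * theta) /\
      - (k * c1 / (2 * c)) * (1 + cos (2 * theta)) <= alpha /\
      alpha <= k * c1 / (2 * c) * (1 - cos (2 * theta)))) /\
  (* the minimum value *)
  (forall a b, c1 * k ^ 2 * (2 - c1 / c) + ebar <= Q a b) /\
  (exists a b, Q a b = c1 * k ^ 2 * (2 - c1 / c) + ebar).
Proof.
  intros c Q.
  assert (hc : 0 < c) by (unfold c; lra).
  set (a := cos (2*theta)). set (b := sin (2*theta)).
  assert (hab : a^2 + b^2 = 1).
  { unfold a, b. rewrite <- (sin2_cos2 (2*theta)). unfold Rsqr. ring. }
  set (m := c1 * k ^ 2 * (2 - c1 / c) + ebar).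
  set (r := c1*k/c).
  assert (hr : 0 < r) by (unfold r; apply Rdiv_lt_0_compat; nra).
  assert (hcr : c*r = c1*k) by (unfold r; field; lra).
  assert (hm : m = 2*c1*k^2 + ebar - c*r^2) by (unfold m, r; field; lra).
  assert (hr2 : k * c1 / (2 * c) = r/2) by (unfold r; field; lra).
  assert (H1 : forall al be ga, m <= Qfun c1 c2 k ebar theta al be ga).
  { intros al be ga. rewrite Qfun_eq. fold a b c.
    set (d := al*ga - be*be).
    assert (d <= Rabs d) by apply Rle_abs.
    assert (-d <= Rabs d) by (rewrite <- Rabs_Ropp; apply Rle_abs).
    set (t := a*(ga-al) + 2*b*be).
    assert (ht : t^2 <= (ga-al)^2 + 4*be^2).
    { assert (HH : t^2 + (a*(2*be) - b*(ga-al))^2 = (a^2+b^2)*((ga-al)^2 + (2*be)^2))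
        by (unfold t; ring).
      rewrite hab in HH. assert (0 <= (a*(2*be) - b*(ga-al))^2) by apply pow2_ge_0.
      lra. }
    assert (hS : c*t^2 <= c*(al^2+2*be^2+ga^2) + 2*c*Rabs d).
    { assert (t^2 <= al^2+2*be^2+ga^2 + 2*Rabs d).
      { assert ((ga-al)^2 + 4*be^2 = al^2+2*be^2+ga^2 - 2*d) by (unfold d; ring). lra. }
      replace (c*(al^2+2*be^2+ga^2) + 2*c*Rabs d) with (c*(al^2+2*be^2+ga^2 + 2*Rabs d)) by ring.
      apply Rmult_le_compat_l; lra. }
    assert (0 <= c*(t-r)^2) by (apply Rmult_le_pos; [lra|apply pow2_ge_0]).
    assert (E1 : 2*c1*k*t = 2*(c*r)*t) by (rewrite hcr; ring).
    assert (E2 : c*(t-r)^2 = c*t^2 - 2*(c*r)*t + c*r^2) by ring.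
    rewrite hm. unfold t in *. lra. }
  assert (H2 : forall al be ga, Qfun c1 c2 k ebar theta al be ga = m ->
     be = r*b/2 /\ ga - al = r*a /\ -r <= al+ga <= r).
  { intros al be ga HQ. rewrite Qfun_eq in HQ. fold a b c in HQ.
    set (d := al*ga - be*be) in HQ.
    assert (d <= Rabs d) by apply Rle_abs.
    assert (-d <= Rabs d) by (rewrite <- Rabs_Ropp; apply Rle_abs).
    set (t := a*(ga-al) + 2*b*be) in HQ.
    assert (ht : t^2 + (a*(2*be) - b*(ga-al))^2 = (ga-al)^2 + 4*be^2).
    { replace ((ga-al)^2 + 4*be^2) with ((a^2+b^2)*((ga-al)^2 + (2*be)^2))
        by (rewrite hab; ring). unfold t; ring. }
    set (P := al^2+2*be^2+ga^2 + 2*Rabs d) in HQ.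
    assert (hP1 : (ga-al)^2 + 4*be^2 <= P) by (unfold P, d in *; nra).
    assert (hP2 : (al+ga)^2 <= P) by (unfold P, d in *; nra).
    assert (hz : c*(P - (ga-al)^2 - 4*be^2) + c*(a*(2*be) - b*(ga-al))^2 + c*(t-r)^2 = 0).
    { rewrite hm in HQ. unfold P in HQ.
      assert (E1 : 2*c1*k*t = 2*(c*r)*t) by (rewrite hcr; ring).
      replace (c*(P - (ga-al)^2 - 4*be^2) + c*(a*(2*be) - b*(ga-al))^2 + c*(t-r)^2)
        with (c*P - c*((ga-al)^2 + 4*be^2) + c*(t^2 + (a*(2*be) - b*(ga-al))^2) - 2*(c*r)*t + c*r^2) by ring.
      rewrite ht. unfold P. lra. }
    assert (0 <= c*(P - (ga-al)^2 - 4*be^2)) by (apply Rmult_le_pos; lra).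
    assert (0 <= c*(a*(2*be) - b*(ga-al))^2) by (apply Rmult_le_pos; [lra|apply pow2_ge_0]).
    assert (0 <= c*(t-r)^2) by (apply Rmult_le_pos; [lra|apply pow2_ge_0]).
    assert (e1 : (t-r)^2 = 0) by nra.
    assert (e2 : (a*(2*be) - b*(ga-al))^2 = 0) by nra.
    assert (e3 : P = (ga-al)^2 + 4*be^2) by nra.
    assert (tr : t = r) by nra.
    assert (w : a*(2*be) - b*(ga-al) = 0) by nra.
    unfold t in tr.
    assert (hv : ga - al = r*a).
    { replace (ga-al) with ((a^2+b^2)*(ga-al)) by (rewrite hab; ring).
      replace (r*a) with (a*(a*(ga-al)+2*b*be) - b*(a*(2*be) - b*(ga-al))) by (rewrite tr, w; ring).
      ring. }
    assert (hw : be = r*b/2).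
    { replace be with ((a^2+b^2)*be) by (rewrite hab; ring).
      replace (r*b/2) with ((b*(a*(ga-al)+2*b*be) + a*(a*(2*be) - b*(ga-al)))/2) by (rewrite tr, w; field).
      field. }
    split; [exact hw|split; [exact hv|]].
    assert ((al+ga)^2 <= r^2) by nra.
    split; nra. }
  assert (H3 : forall al, -r <= 2*al + r*a <= r ->
     Qfun c1 c2 k ebar theta al (r*b/2) (al + r*a) = m).
  { intros al hal. rewrite Qfun_eq. fold a b c.
    rewrite (Rabs_left1 (al*(al+r*a) - r*b/2*(r*b/2))).
    - rewrite hm.
      assert (hk1 : c1 = c*r/k) by (rewrite hcr; field; lra).
      rewrite hk1.
      replace (c*r^2) with (c*r^2*(a^2+b^2)) by (rewrite hab; ring).
      field; lra.
    - assert ((2*al+r*a)^2 <= r^2) by nra. nra. }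
  assert (HQ : forall al be, is_min_gamma c1 c2 k ebar theta al be (Q al be)).
  { intros al be. unfold Q, Qbar. apply epsilon_spec.
    destruct (absmin c (-2*c1*k*a) (2*c*al) (-(2*c*be*be)) hc) as [g0 Hg0].
    exists (Qfun c1 c2 k ebar theta al be g0). split.
    - exists g0. reflexivity.
    - intro g. specialize (Hg0 g). rewrite !Qfun_eq. fold a b c.
      replace (2*c*Rabs(al*g0 - be*be)) with (Rabs (2*c*al*g0 + -(2*c*be*be))).
      2:{ replace (2*c*al*g0 + -(2*c*be*be)) with ((2*c)*(al*g0-be*be)) by ring.
          rewrite Rabs_mult, (Rabs_right (2*c)) by lra. ring. }
      replace (2*c*Rabs(al*g - be*be)) with (Rabs (2*c*al*g + -(2*c*be*be))).
      2:{ replace (2*c*al*g + -(2*c*be*be)) with ((2*c)*(al*g-be*be)) by ring.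
          rewrite Rabs_mult, (Rabs_right (2*c)) by lra. ring. }
      nra. }
  assert (Huniq : forall al be q, is_min_gamma c1 c2 k ebar theta al be q -> Q al be = q).
  { intros al be q [[g1 Hg1] Hq]. destruct (HQ al be) as [[g2 Hg2] Hq2].
    specialize (Hq g2). specialize (Hq2 g1). lra. }
  assert (Hseg : forall al, -r <= 2*al + r*a <= r -> Q al (r*b/2) = m).
  { intros al hal. apply Huniq. split.
    - exists (al + r*a). apply H3; auto.
    - intro g. apply H1. }
  assert (Hlow : forall a0 b0, m <= Q a0 b0).
  { intros a0 b0. destruct (HQ a0 b0) as [[g Hg] _]. rewrite <- Hg. apply H1. }
  assert (Hmin : Q (-(r*a)/2) (r*b/2) = m).
  { apply Hseg. nra. }
  split; [exact HQ|]. split; [|split; [exact Hlow| exists (-(r*a)/2), (r*b/2); exact Hmin]].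
  intros al be. rewrite hr2. fold a b. split.
  - intro H. specialize (H (-(r*a)/2) (r*b/2)). rewrite Hmin in H.
    destruct (HQ al be) as [[g Hg] _].
    assert (Qfun c1 c2 k ebar theta al be g = m) by (specialize (H1 al be g); lra).
    destruct (H2 _ _ _ H0) as [hb [hv hu]].
    split; [lra|]. split; nra.
  - intros [hb [hl hu]]. intros a0 b0. rewrite hb. replace (r/2*b) with (r*b/2) by field.
    rewrite Hseg by nra. apply Hlow.
Qed.
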